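(* Let $I\subseteq\mathbb{R}_+$ be a nonempty, non-singleton interval, let $n\in\mathbb{N}$, and let $\Phi: I\to\mathbb{R}_+$ be subadditive of order $n$. Then for all $x,y\in I$ with $x+y\in I$, $$\Phi(x+y)\leq \max\{\Phi(x)+(2^n-1)\Phi(y),\ (2^n-1)\Phi(x)+\Phi(y)\}.$$
   Context: $\mathbb{R}_+$ denotes the set of nonnegative real numbers. For $n\in\mathbb{N}$, a function $\Phi: I\to\mathbb{R}_+$ is called subadditive of order $n$ if for all $x,y\in I$ with $y>0$ and $x+y\in I$ one has $\Phi(x+y)\leq \Phi(x)+\frac{(x+y)^n-x^n}{y^n}\Phi(y)$. *)

(* Defs.v *)
From Stdlib Require Import Reals.
Open Scope R_scope.

Definition is_interval (I : R -> Prop) : Prop :=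
  forall a b c, I a -> I c -> a <= b -> b <= c -> I b.

Definition nonneg_nondegenerate_interval (I : R -> Prop) : Prop :=
  is_interval I /\ (forall x, I x -> 0 <= x) /\ (exists a b, I a /\ I b /\ a <> b).

Definition nonneg_on (I : R -> Prop) (Phi : R -> R) : Prop :=
  forall x, I x -> 0 <= Phi x.

Definition subadditive_of_order (n : nat) (I : R -> Prop) (Phi : R -> R) : Prop :=
  forall x y, I x -> I y -> 0 < y -> I (x + y) ->
    Phi (x + y) <= Phi x + ((x + y) ^ n - x ^ n) / (y ^ n) * Phi y.

(* Main.v *)
Require Import Defs.
From Stdlib Require Import Reals Lra.
Open Scope R_scope.

Lemma key_ineq (n : nat) (x y : R) : 0 <= x -> x <= y ->
  (x + y) ^ n - x ^ n <= (2 * y) ^ n - y ^ n.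
Proof.
  intros hx hxy. induction n as [|n IH]; simpl; [lra|].
  assert (A0 : 0 <= (x + y) ^ n - x ^ n).
  { assert (x ^ n <= (x + y) ^ n) by (apply pow_incr; lra). lra. }
  assert (Hxn : x ^ n <= y ^ n) by (apply pow_incr; lra).
  assert (H1 : (x + y) * ((x + y) ^ n - x ^ n) <= (2 * y) * ((2 * y) ^ n - y ^ n)).
  { apply Rmult_le_compat; lra. }
  assert (H2 : y * x ^ n <= y * y ^ n) by (apply Rmult_le_compat_l; lra).
  nra.
Qed.

Lemma coef_bound (n : nat) (x y : R) : 0 <= x -> x <= y -> 0 < y ->
  ((x + y) ^ n - x ^ n) / (y ^ n) <= 2 ^ n - 1.
Proof.
  intros hx hxy hy.
  pose proof (key_ineq n x y hx hxy) as K.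
  rewrite Rpow_mult_distr in K.
  assert (hyn : 0 < y ^ n) by (apply pow_lt; lra).
  apply (Rmult_le_reg_r (y ^ n)); auto.
  unfold Rdiv. rewrite Rmult_assoc, Rinv_l by lra. lra.
Qed.

Theorem proposition2p5 (I : R -> Prop) (n : nat) (Phi : R -> R) :
  nonneg_nondegenerate_interval I ->
  nonneg_on I Phi ->
  subadditive_of_order n I Phi ->
  forall x y, I x -> I y -> I (x + y) ->
    Phi (x + y) <= Rmax (Phi x + (2 ^ n - 1) * Phi y) ((2 ^ n - 1) * Phi x + Phi y).
Proof.
  intros [_ [Hpos _]] Hnn Hsub x y Ix Iy Ixy.
  pose proof (Hpos x Ix) as hx. pose proof (Hpos y Iy) as hy.
  pose proof (Hnn x Ix) as px. pose proof (Hnn y Iy) as py.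
  assert (h2 : 1 <= 2 ^ n) by (apply pow_R1_Rle; lra).
  destruct (Rle_lt_dec x y) as [hxy|hxy].
  - apply Rle_trans with (Phi x + (2 ^ n - 1) * Phi y); [|apply Rmax_l].
    destruct (Req_dec y 0) as [e|ne].
    + subst y. rewrite Rplus_0_r. nra.
    + pose proof (Hsub x y Ix Iy ltac:(lra) Ixy) as S.
      pose proof (coef_bound n x y hx hxy ltac:(lra)) as C.
      assert (((x + y) ^ n - x ^ n) / y ^ n * Phi y <= (2 ^ n - 1) * Phi y)
        by (apply Rmult_le_compat_r; lra).
      lra.
  - apply Rle_trans with ((2 ^ n - 1) * Phi x + Phi y); [|apply Rmax_r].
    rewrite Rplus_comm in Ixy |- *.
    pose proof (Hsub y x Iy Ix ltac:(lra) Ixy) as S.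
    pose proof (coef_bound n y x hy ltac:(lra) ltac:(lra)) as C.
    assert (((y + x) ^ n - y ^ n) / x ^ n * Phi x <= (2 ^ n - 1) * Phi x)
      by (apply Rmult_le_compat_r; lra).
    lra.
Qed.
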